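(* For all even integers $n\ge2$ and real numbers $a\ge1$, $x\in(0,\pi)$, we have $S_{n,a}(x)\ge 2\sin(x)(1+\cos(x))$. Equality holds if and only if $n=2$, $a=1$ (any $x$), or $n=4$, $a=1$, $x=\pi/2$.
   Context: For a real number $a$ and integers $0\le m$, $\binom{m+a}{m}=\frac{(a+1)(a+2)\cdots(a+m)}{m!}$ (equal to $1$ when $m=0$). For an integer $n\ge1$, $S_{n,a}(x)=\sum_{j=1}^n\binom{n+a-j}{n-j}\sin(jx)$. *)

(* Defs.v *)
From Stdlib Require Import Reals Lra Lia Arith Factorial.
Open Scope R_scope.

Fixpoint rising (a : R) (m : nat) : R :=
  match m with
  | O => 1
  | S k => rising a k * (a + INR (S k))
  end.

(* binom(m+a, m) = (a+1)...(a+m)/m!, equal to 1 when m = 0. *)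
Definition gbinom (m : nat) (a : R) : R := rising a m / INR (fact m).

(* S_{n,a}(x) = sum_{j=1}^n binom(n+a-j, n-j) sin(j x). *)
Fixpoint Ssum (n j : nat) (a x : R) : R :=
  match j with
  | O => 0
  | S k => Ssum n k a x + gbinom (n - S k) a * sin (INR (S k) * x)
  end.

Definition S_na (n : nat) (a x : R) : R := Ssum n n a x.

(* Main.v *)
Require Import Defs.
From Stdlib Require Import Reals Lra Lia Factorial.
Open Scope R_scope.

Fixpoint sm (n : nat) (f : nat -> R) : R :=
  match n with O => 0 | S k => sm k f + f k end.

Lemma sm_ext n f g : (forall i, (i < n)%nat -> f i = g i) -> sm n f = sm n g.
Proof. induction n; cbn [sm]; intros H; [reflexivity|].
  rewrite IHn by (intros; apply H; lia). rewrite H by lia. reflexivity. Qed.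

Lemma sm_add n f g : sm n (fun i => f i + g i) = sm n f + sm n g.
Proof. induction n; cbn [sm]; [lra|]. rewrite IHn; lra. Qed.

Lemma sm_scal n c f : sm n (fun i => c * f i) = c * sm n f.
Proof. induction n; cbn [sm]; [lra|]. rewrite IHn; lra. Qed.

Lemma sm_scalr n c f : sm n (fun i => f i * c) = sm n f * c.
Proof. induction n; cbn [sm]; [lra|]. rewrite IHn; lra. Qed.

Lemma sm_zero n : sm n (fun _ => 0) = 0.
Proof. induction n; cbn [sm]; [lra|]. rewrite IHn; lra. Qed.

Lemma sm_nonneg n f : (forall i, (i<n)%nat -> 0 <= f i) -> 0 <= sm n f.
Proof. induction n; cbn [sm]; intros H; [lra|].
  assert (0 <= sm n f) by (apply IHn; intros; apply H; lia).
  assert (0 <= f n) by (apply H; lia). lra. Qed.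

Lemma sm_shift n f : sm (S n) f = f O + sm n (fun i => f (S i)).
Proof. induction n; cbn [sm] in *; [lra|]. rewrite IHn. lra. Qed.

Lemma sm_exch n m (f : nat -> nat -> R) :
  sm n (fun i => sm m (fun j => f i j)) = sm m (fun j => sm n (fun i => f i j)).
Proof. induction n; cbn [sm].
  - symmetry; apply sm_zero.
  - rewrite sm_add, IHn. reflexivity. Qed.

Lemma sm_trunc m n f : (m <= n)%nat ->
  sm m f = sm n (fun i => if Nat.ltb i m then f i else 0).
Proof. intros H. induction n.
  - assert (m = 0)%nat by lia; subst; reflexivity.
  - destruct (Nat.eq_dec m (S n)).
    + subst. apply sm_ext; intros i Hi. destruct (Nat.ltb_spec i (S n)); [reflexivity|lia].
    + cbn [sm]. rewrite IHn by lia. destruct (Nat.ltb_spec n m); [lia|lra].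
Qed.

Lemma tri_exch n (g : nat -> nat -> R) :
  sm n (fun k => sm (n - k) (fun i => g i k)) = sm n (fun i => sm (n - i) (fun k => g i k)).
Proof.
  transitivity (sm n (fun k => sm n (fun i => if Nat.ltb (i + k) n then g i k else 0))).
  - apply sm_ext; intros k Hk. rewrite (sm_trunc (n-k) n) by lia. apply sm_ext; intros i Hi.
    destruct (Nat.ltb_spec i (n-k)), (Nat.ltb_spec (i+k) n); try reflexivity; lia.
  - rewrite sm_exch. apply sm_ext; intros i Hi. rewrite (sm_trunc (n-i) n) by lia.
    apply sm_ext; intros k Hk.
    destruct (Nat.ltb_spec k (n-i)), (Nat.ltb_spec (i+k) n); try reflexivity; lia.
Qed.

Lemma Ssum_sm n j a x : Ssum n j a x = sm j (fun k => gbinom (n - S k) a * sin (INR (S k) * x)).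
Proof. induction j; cbn [Ssum sm]; [reflexivity|]. rewrite IHj. reflexivity. Qed.

Lemma rising_shift c m : rising c (S m) = (c + 1) * rising (c + 1) m.
Proof. induction m.
  - simpl; ring.
  - change (rising c (S (S m))) with (rising c (S m) * (c + INR (S (S m)))). rewrite IHm.
    change (rising (c+1) (S m)) with (rising (c+1) m * (c + 1 + INR (S m))).
    rewrite (S_INR (S m)). ring.
Qed.

Lemma gbinom0 b : gbinom 0 b = 1.
Proof. unfold gbinom; simpl; field. Qed.

Lemma gbinom1 b : gbinom 1 b = b + 1.
Proof. unfold gbinom; simpl; field. Qed.

Lemma gbinom_rec m b : gbinom (S m) b = gbinom m b + gbinom (S m) (b - 1).
Proof. unfold gbinom. rewrite (rising_shift (b-1)). replace (b - 1 + 1) with b by ring.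
  change (rising b (S m)) with (rising b m * (b + INR (S m))).
  change (fact (S m)) with (S m * fact m)%nat. rewrite mult_INR.
  assert (INR (fact m) <> 0) by apply INR_fact_neq_0.
  assert (INR (S m) <> 0) by (apply not_0_INR; lia).
  field. auto.
Qed.

Lemma hockey k b c : c = b - 1 -> sm (S k) (fun i => gbinom i c) = gbinom k b.
Proof. intros ->. induction k.
  - cbn [sm]. rewrite !gbinom0; ring.
  - change (sm (S (S k)) (fun i => gbinom i (b-1))) with
      (sm (S k) (fun i => gbinom i (b-1)) + gbinom (S k) (b-1)).
    rewrite IHk, (gbinom_rec k b). reflexivity.
Qed.

Lemma conv_coef k b : sm (S k) (fun i => gbinom i (b - 2) * (INR k - INR i + 1)) = gbinom k b.
Proof. induction k.
  - cbn [sm]. rewrite !gbinom0; simpl; ring.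
  - change (sm (S (S k)) (fun i => gbinom i (b-2) * (INR (S k) - INR i + 1))) with
      (sm (S k) (fun i => gbinom i (b-2) * (INR (S k) - INR i + 1)) + gbinom (S k) (b-2) * (INR (S k) - INR (S k) + 1)).
    rewrite (sm_ext _ _ (fun i => gbinom i (b-2) * (INR k - INR i + 1) + gbinom i (b-2)))
      by (intros; rewrite S_INR; ring).
    rewrite sm_add, IHk, (hockey k (b-1) (b-2)) by ring.
    rewrite (gbinom_rec k b), (gbinom_rec k (b-1)). replace (b-1-1) with (b-2) by ring. ring.
Qed.

Definition F x m := sm m (fun k => (INR (m - 1 - k) + 1) * sin (INR (S k) * x)).
Definition Q x p := sm p (fun k => sin (INR (S k) * x)).

Lemma F_S x m : F x (S m) = F x m + Q x (S m).
Proof. unfold F, Q. cbn [sm].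
  replace (S m - 1 - m)%nat with 0%nat by lia.
  rewrite (sm_ext m _ (fun k => (INR (m - 1 - k) + 1) * sin (INR (S k) * x) + sin (INR (S k) * x))).
  - rewrite sm_add. simpl (INR 0). ring.
  - intros i Hi. replace (S m - 1 - i)%nat with (S (m - 1 - i)) by lia. rewrite S_INR. ring.
Qed.

Lemma D_eq x p : 2 * (1 - cos x) * Q x p = sin x + sin (INR p * x) - sin (INR (S p) * x).
Proof. induction p.
  - unfold Q; cbn [sm]. simpl INR. rewrite Rmult_0_l, sin_0, Rmult_1_l. ring.
  - unfold Q in *. cbn [sm]. rewrite Rmult_plus_distr_l, IHp.
    set (u := INR (S p) * x).
    replace (INR (S (S p)) * x) with (u + x) by (unfold u; rewrite (S_INR (S p)); ring).
    replace (INR p * x) with (u - x) by (unfold u; rewrite S_INR; ring).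
    rewrite sin_plus, sin_minus. ring.
Qed.

Lemma E_eq x m : 2 * (1 - cos x) * F x m = (INR m + 1) * sin x - sin ((INR m + 1) * x).
Proof. induction m.
  - unfold F; cbn [sm]. simpl INR. replace ((0+1)*x) with x by ring. ring.
  - rewrite F_S, Rmult_plus_distr_l, IHm, D_eq. rewrite !S_INR. ring.
Qed.

Lemma trig_basic x : 0 < x < PI -> 0 < sin x /\ -1 < cos x < 1 /\ sin x ^ 2 + cos x ^ 2 = 1.
Proof. intros Hx. assert (Hs : 0 < sin x) by (apply sin_gt_0; lra).
  assert (Hp : sin x ^ 2 + cos x ^ 2 = 1) by (pose proof (sin2_cos2 x); unfold Rsqr in *; lra).
  split; [lra|]. split; [|lra]. destruct (COS_bound x).
  split; nra.
Qed.

Lemma sin_bound x k : 0 < x < PI -> Rabs (sin (INR (S (S k)) * x)) < INR (S (S k)) * sin x.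
Proof. intros Hx. destruct (trig_basic x Hx) as [Hs [Hc Hp]]. induction k.
  - replace (INR 2 * x) with (2 * x) by (simpl; ring). rewrite sin_2a.
    simpl INR. apply Rabs_def1; nra.
  - replace (INR (S (S (S k))) * x) with (INR (S (S k)) * x + x) by (rewrite (S_INR (S (S k))); ring).
    rewrite sin_plus. rewrite (S_INR (S (S k))).
    pose proof (Rabs_triang (sin (INR (S (S k)) * x) * cos x) (cos (INR (S (S k)) * x) * sin x)).
    rewrite !Rabs_mult in H. rewrite (Rabs_pos_eq (sin x)) in H by lra.
    assert (Rabs (cos x) <= 1) by (apply Rabs_le; lra).
    assert (Rabs (cos (INR (S (S k)) * x)) <= 1) by (apply Rabs_le; apply COS_bound).
    pose proof (Rabs_pos (sin (INR (S (S k)) * x))).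
    pose proof (Rabs_pos (cos (INR (S (S k)) * x))).
    nra.
Qed.

Lemma F_pos x m : 0 < x < PI -> (1 <= m)%nat -> 0 < F x m.
Proof. intros Hx Hm. destruct (trig_basic x Hx) as [Hs [Hc Hp]].
  pose proof (E_eq x m) as E. destruct m as [|m']; [lia|].
  replace (INR (S m') + 1) with (INR (S (S m'))) in E by (rewrite (S_INR (S m')); ring).
  pose proof (sin_bound x m' Hx). pose proof (Rle_abs (sin (INR (S (S m')) * x))).
  nra.
Qed.

Lemma F_nonneg x m : 0 < x < PI -> 0 <= F x m.
Proof. intros Hx. destruct m. unfold F; simpl; lra. apply Rlt_le, F_pos; auto; lia. Qed.

Definition Hf x p := (2 * INR p + 1) * sin x - sin ((2 * INR p + 1) * x) - 4 * sin x ^ 3.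

Lemma H_S x p : Hf x (S p) = Hf x p + 4 * sin x * sin (INR (S p) * x) ^ 2.
Proof. unfold Hf. rewrite S_INR.
  set (u := 2 * ((INR p + 1) * x)).
  replace ((2 * (INR p + 1) + 1) * x) with (u + x) by (unfold u; ring).
  replace ((2 * INR p + 1) * x) with (u - x) by (unfold u; ring).
  rewrite sin_plus, sin_minus. unfold u. rewrite cos_2a_sin. ring.
Qed.

Lemma H1 x : Hf x 1 = 0.
Proof. unfold Hf. simpl INR. replace ((2 * 1 + 1) * x) with (2 * x + x) by ring.
  rewrite sin_plus, sin_2a, cos_2a_sin.
  pose proof (sin2_cos2 x) as S2; unfold Rsqr in S2.
  transitivity (2 * sin x * (1 - (sin x * sin x + cos x * cos x))); [ring|]. rewrite S2; ring.
Qed.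

Lemma H_mono x p q : 0 < x < PI -> Hf x p <= Hf x (p + q).
Proof. intros Hx. destruct (trig_basic x Hx) as [Hs _]. induction q.
  - rewrite Nat.add_0_r; lra.
  - rewrite Nat.add_succ_r, H_S. nra.
Qed.

Lemma H_nonneg x p : 0 < x < PI -> (1 <= p)%nat -> 0 <= Hf x p.
Proof. intros Hx Hp. replace p with (1 + (p - 1))%nat by lia.
  pose proof (H_mono x 1 (p-1) Hx) as M. rewrite H1 in M. auto. Qed.

Lemma H3_pos x : 0 < x < PI -> 0 < Hf x 3.
Proof. intros Hx. destruct (trig_basic x Hx) as [Hs [Hc Hp]].
  change 3%nat with (S (S 1)). rewrite H_S, H_S, H1.
  replace (INR 2 * x) with (2 * x) by (simpl; ring).
  replace (INR 3 * x) with (2 * x + x) by (simpl; ring).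
  pose proof (sin2_cos2 (2 * x)); unfold Rsqr in *.
  assert (0 < sin (2 * x) ^ 2 + (sin (2 * x) * cos x + cos (2 * x) * sin x) ^ 2).
  { destruct (Req_dec (sin (2 * x)) 0) as [E|E].
    - rewrite E. assert (cos (2 * x) * cos (2*x) = 1) by nra. nra.
    - assert (0 < sin (2*x) ^ 2) by (simpl; rewrite Rmult_1_r; apply Rsqr_pos_lt; auto).
      assert (0 <= (sin (2 * x) * cos x + cos (2 * x) * sin x) ^ 2) by apply pow2_ge_0. lra. }
  replace (0 + 4 * sin x * sin (2 * x) ^ 2 + 4 * sin x * sin (2 * x + x) ^ 2) with
    (4 * sin x * (sin (2 * x) ^ 2 + sin (2 * x + x) ^ 2)) by ring.
  rewrite sin_plus. apply Rmult_lt_0_compat; lra.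
Qed.

Lemma H_zero x p : 0 < x < PI -> (1 <= p)%nat -> Hf x p = 0 ->
  p = 1%nat \/ (p = 2%nat /\ x = PI / 2).
Proof. intros Hx Hp HH. destruct (trig_basic x Hx) as [Hs [Hc Hq]].
  destruct (Compare_dec.le_lt_dec p 2).
  - destruct (Nat.eq_dec p 1); [auto|]. right. assert (p = 2%nat) by lia. subst. split; auto.
    change 2%nat with (S 1) in HH. rewrite H_S, H1 in HH.
    replace (INR 2 * x) with (2 * x) in HH by (simpl; ring).
    assert (Z : 4 * sin x * sin (2 * x) ^ 2 = 0) by lra.
    apply Rmult_integral in Z. destruct Z as [Z|Z]; [lra|].
    simpl in Z. rewrite Rmult_1_r in Z. apply Rmult_integral in Z. assert (Z2 : sin (2 * x) = 0) by (destruct Z; auto). rewrite sin_2a in Z2.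
    assert (cos x = 0) by nra. apply cos_inj; try lra. rewrite cos_PI2. auto.
  - pose proof (H_mono x 3 (p - 3) Hx). replace (3 + (p-3))%nat with p in H by lia.
    pose proof (H3_pos x Hx). lra.
Qed.

Lemma decomp n a x : S_na n a x = sm n (fun i => gbinom i (a - 2) * F x (n - i)).
Proof.
  unfold S_na. rewrite Ssum_sm.
  rewrite (sm_ext n _ (fun k => sm (n - k) (fun i =>
     gbinom i (a - 2) * (INR (n - S k) - INR i + 1) * sin (INR (S k) * x)))).
  2:{ intros k Hk. rewrite <- (conv_coef (n - S k) a). rewrite <- sm_scalr.
      replace (S (n - S k)) with (n - k)%nat by lia. reflexivity. }
  rewrite tri_exch. apply sm_ext; intros i Hi.
  unfold F. rewrite <- sm_scal. apply sm_ext; intros k Hk.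
  assert (E : (n - S k = (n - i - 1 - k) + i)%nat) by lia.
  rewrite E, plus_INR. ring.
Qed.

Lemma rising_nonneg c m : -1 <= c -> 0 <= rising c m.
Proof. intros Hc. induction m; [simpl; lra|].
  change (rising c (S m)) with (rising c m * (c + INR (S m))).
  apply Rmult_le_pos; auto. rewrite S_INR. pose proof (pos_INR m). lra. Qed.

Lemma gbinom_nonneg c m : -1 <= c -> 0 <= gbinom m c.
Proof. intros Hc. unfold gbinom. apply Rmult_le_pos. apply rising_nonneg; auto.
  apply Rlt_le, Rinv_0_lt_compat, INR_fact_lt_0. Qed.

Lemma gbinom_m1 m : gbinom (S m) (-1) = 0.
Proof. unfold gbinom. rewrite rising_shift. replace (-1 + 1) with 0 by ring.
  unfold Rdiv; ring. Qed.

Theorem theorem3p2 (n : nat) (a x : R) :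
  (2 <= n)%nat -> Nat.Even n -> 1 <= a -> 0 < x < PI ->
  S_na n a x >= 2 * sin x * (1 + cos x) /\
  (S_na n a x = 2 * sin x * (1 + cos x) <->
     ((n = 2%nat /\ a = 1) \/ (n = 4%nat /\ a = 1 /\ x = PI / 2))).
Proof.
  intros Hn [p Hp] Ha Hx.
  destruct (trig_basic x Hx) as [Hs [Hc Hq]].
  assert (Hp1 : (1 <= p)%nat) by lia.
  assert (KE : 2 * (1 - cos x) * (F x n - 2 * sin x * (1 + cos x)) = Hf x p).
  { rewrite Rmult_minus_distr_l, E_eq. unfold Hf. rewrite Hp, mult_INR.
    replace (INR 2) with 2 by (simpl; ring). ring_simplify. 
    replace (cos x ^ 2) with (1 - sin x ^ 2) by lra. ring. }
  pose proof (H_nonneg x p Hx Hp1) as HN.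
  assert (FB : F x n >= 2 * sin x * (1 + cos x)) by nra.
  destruct n as [|[|m]]; try lia.
  rewrite decomp. rewrite sm_shift, sm_shift.
  rewrite gbinom0, gbinom1. replace (a - 2 + 1) with (a - 1) by ring.
  replace (S (S m) - 0)%nat with (S (S m)) by lia.
  replace (S (S m) - 1)%nat with (S m) by lia.
  set (rest := sm m _).
  assert (Rn : 0 <= rest).
  { apply sm_nonneg; intros i Hi. apply Rmult_le_pos.
    apply gbinom_nonneg; lra. apply F_nonneg; auto. }
  assert (F1 : 0 < F x (S m)) by (apply F_pos; auto; lia).
  split; [nra|]. split.
  - intros EQ.
    assert (Ha1 : a = 1) by nra.
    assert (HZ : Hf x p = 0) by nra.
    destruct (H_zero x p Hx Hp1 HZ) as [-> | [-> ->]]; [left|right]; split; auto; lia.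
  - intros HH. assert (Ha1 : a = 1) by (destruct HH as [[_ A]|[_ [A _]]]; auto).
    assert (rest = 0).
    { unfold rest. rewrite <- (sm_zero m). apply sm_ext; intros i Hi.
      subst a. replace (1 - 2) with (-1) by ring. rewrite gbinom_m1. ring. }
    assert (HZ : Hf x p = 0).
    { destruct HH as [[A _]|[A [_ B]]].
      - assert (p = 1%nat) by lia. subst p. apply H1.
      - assert (p = 2%nat) by lia. subst p. change 2%nat with (S 1). rewrite H_S, H1.
        replace (INR 2 * x) with (2 * x) by (simpl; ring). rewrite B.
        replace (2 * (PI / 2)) with PI by field. rewrite sin_PI. ring. }
    subst a. nra.
Qed.
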